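(* Let $\beta_1,\beta_2>0$, $\nu_1,\nu_2\in(0,1)$, $\rho_1,\rho_2\in(0,1)$, and define \[ A=\beta_1(1-\nu_1)+\beta_2(1-\nu_2),\quad a=\beta_1(1-\nu_1)-\beta_2(1-\nu_2),\quad B=\beta_1\nu_1+\beta_2\nu_2,\quad b=-\beta_1\nu_1+\beta_2\nu_2, \] \[ D=\beta_1(1-\nu_1)(1-\rho_1)+\beta_2(1-\nu_2)(1-\rho_2),\qquad d=-\beta_1(1-\nu_1)(1-\rho_1)+\beta_2(1-\nu_2)(1-\rho_2). \] Assume $1-\frac{DB-bd}{AB+ba}>0$ and set $z_0=\ln\!\Big(1-\frac{DB-bd}{AB+ba}\Big)$. Consider the system on $\mathbb{R}^3$ \[ \dot z=e^{z_0}(1-e^{z})-u+\frac{b}{B}\,w,\qquad \dot u=\Big(A+\frac{ba}{B}\Big)e^{z_0}(e^{z}-1),\qquad \dot w=a\,e^{z_0}(e^{z}-1)-B\,w . \] If $B^2>ab$, then this system is globally stable, with all solutions tending to $(0,0,0)$ as $t\to\infty$.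
   Context: The system is obtained from the two-group resource–consumption model $\dot x=(1-x)x-(y_1+y_2)x$, $\dot y_1=\beta_1((1-\nu_1)(x-\rho_1)-\nu_1(y_1-y_2))$, $\dot y_2=\beta_2((1-\nu_2)(x-\rho_2)-\nu_2(y_2-y_1))$ by shifting its equilibrium to the origin after the substitutions $\ln x$, $y_1+y_2$, $y_1-y_2$; $e^{z_0}$ is the equilibrium resource level. *)

(* Defs.v *)
From Stdlib Require Import Reals.
From Coquelicot Require Import Coquelicot.
Open Scope R_scope.

Definition cA (b1 b2 n1 n2 : R) : R := b1 * (1 - n1) + b2 * (1 - n2).
Definition ca (b1 b2 n1 n2 : R) : R := b1 * (1 - n1) - b2 * (1 - n2).
Definition cB (b1 b2 n1 n2 : R) : R := b1 * n1 + b2 * n2.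
Definition cb (b1 b2 n1 n2 : R) : R := - b1 * n1 + b2 * n2.
Definition cD (b1 b2 n1 n2 r1 r2 : R) : R :=
  b1 * (1 - n1) * (1 - r1) + b2 * (1 - n2) * (1 - r2).
Definition cd (b1 b2 n1 n2 r1 r2 : R) : R :=
  - b1 * (1 - n1) * (1 - r1) + b2 * (1 - n2) * (1 - r2).

Definition fz (z0 B b : R) (z u w : R) : R := exp z0 * (1 - exp z) - u + (b / B) * w.
Definition fu (z0 A a B b : R) (z u w : R) : R := (A + b * a / B) * exp z0 * (exp z - 1).
Definition fw (z0 a B : R) (z u w : R) : R := a * exp z0 * (exp z - 1) - B * w.

Definition is_solution (z0 A a B b : R) (z u w : R -> R) : Prop :=
  (forall t, 0 < t ->
     is_derive z t (fz z0 B b (z t) (u t) (w t)) /\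
     is_derive u t (fu z0 A a B b (z t) (u t) (w t)) /\
     is_derive w t (fw z0 a B (z t) (u t) (w t))) /\
  filterlim z (at_right 0) (locally (z 0)) /\
  filterlim u (at_right 0) (locally (u 0)) /\
  filterlim w (at_right 0) (locally (w 0)).

Definition norm3 (x y v : R) : R := sqrt (x ^ 2 + y ^ 2 + v ^ 2).

(* Main.v *)
Require Import Defs.
From Stdlib Require Import Reals Lra Psatz.
From Coquelicot Require Import Coquelicot.
Open Scope R_scope.

Definition Vf K c g (z u w : R) := 2*K*c*(exp z - 1 - z) + u*u + g*(w*w).
Definition Gf K c g dl lm (z u w : R->R) s :=
  exp (lm*s) * (Vf K c g (z s) (u s) (w s) + dl*(u s * z s)).

Lemma Gf_deriv (K c g dl lm : R) (z u w : R -> R) (t dz du dw : R) :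
  is_derive z t dz -> is_derive u t du -> is_derive w t dw ->
  is_derive (Gf K c g dl lm z u w) t
   (exp (lm*t) * (lm * (Vf K c g (z t) (u t) (w t) + dl*(u t * z t)) +
     (2*K*c*(exp (z t) - 1)*dz + 2*u t*du + 2*g*(w t)*dw + dl*(du*z t + u t*dz)))).
Proof.
  intros Hz Hu Hw. unfold Gf, Vf.
  auto_derive.
  - repeat split; eexists; eassumption.
  - replace (Derive (fun x => z x) t) with dz by (symmetry; now apply is_derive_unique).
    replace (Derive (fun x => u x) t) with du by (symmetry; now apply is_derive_unique).
    replace (Derive (fun x => w x) t) with dw by (symmetry; now apply is_derive_unique).
    set (E := exp (z t)); set (E2 := exp (lm*t)); set (zt := z t); set (ut := u t); set (wt := w t); simpl; ring.
Qed.

Lemma mono_lemma (F dF : R -> R) :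
  (forall t, 0 < t -> is_derive F t (dF t)) -> (forall t, 0 < t -> dF t <= 0) ->
  filterlim F (at_right 0) (locally (F 0)) -> forall t, 0 <= t -> F t <= F 0.
Proof.
  intros HD Hneg Hl t Ht.
  assert (Hm : forall s, 0 < s -> s <= t -> F t <= F s).
  { intros s Hs Hst.
    destruct (MVT_gen F s t dF) as [x [Hx Heq]].
    - intros x Hx. apply HD. rewrite Rmin_left in Hx by lra. lra.
    - intros x Hx. rewrite Rmin_left in Hx by lra. apply continuity_pt_filterlim.
      apply (@ex_derive_continuous R_AbsRing R_NormedModule). eexists. apply HD. lra.
    - rewrite Rmin_left in Hx by lra. rewrite Rmax_right in Hx by lra.
      assert (dF x <= 0) by (apply Hneg; lra).
      assert (dF x * (t - s) <= 0) by nra. lra. }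
  destruct (Rle_dec (F t) (F 0)) as [h|h]; [exact h|].
  exfalso. destruct Ht as [Ht|Ht]; [| subst; lra].
  assert (He : 0 < F t - F 0) by lra.
  specialize (Hl (fun y => Rabs (y - F 0) < F t - F 0)).
  destruct (Hl (locally_ball (F 0) (mkposreal _ He))) as [d Hd].
  set (s := Rmin (d/2) t).
  assert (0 < s) by (unfold s; apply Rmin_glb_lt; [destruct d; simpl; lra| lra]).
  assert (s <= t) by (unfold s; apply Rmin_r).
  assert (s <= d/2) by (unfold s; apply Rmin_l).
  assert (Hs : Rabs (F s - F 0) < F t - F 0).
  { apply Hd; [| lra]. unfold ball; simpl; unfold AbsRing_ball; simpl.
    unfold abs, minus, plus, opp; simpl. rewrite Rabs_right by lra. destruct d; simpl in *; lra. }
  pose proof (Hm s ltac:(lra) ltac:(lra)).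
  apply Rabs_def2 in Hs. lra.
Qed.

Section L.
Notation F := (at_right 0).
Lemma lim_plus f g a b : filterlim f F (locally a) -> filterlim g F (locally b) ->
  filterlim (fun s => f s + g s) F (locally (a + b)).
Proof. intros Hf Hg. exact (filterlim_comp_2 f g Rplus Hf Hg (@filterlim_plus R_AbsRing R_NormedModule a b)). Qed.
Lemma lim_mult f g a b : filterlim f F (locally a) -> filterlim g F (locally b) ->
  filterlim (fun s => f s * g s) F (locally (a * b)).
Proof. intros Hf Hg. exact (filterlim_comp_2 f g Rmult Hf Hg (@filterlim_mult R_AbsRing a b)). Qed.
Lemma lim_opp f a : filterlim f F (locally a) -> filterlim (fun s => - f s) F (locally (- a)).
Proof. intros Hf. exact (filterlim_comp _ _ _ _ _ _ _ _ Hf (@filterlim_opp R_AbsRing R_NormedModule a)). Qed.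
Lemma lim_minus f g a b : filterlim f F (locally a) -> filterlim g F (locally b) ->
  filterlim (fun s => f s - g s) F (locally (a - b)).
Proof. intros Hf Hg. apply lim_plus; [exact Hf| apply lim_opp; exact Hg]. Qed.
Lemma lim_const (a : R) : filterlim (fun _ => a) F (locally a).
Proof. apply filterlim_const. Qed.
Lemma lim_id : filterlim (fun s => s) F (locally 0).
Proof. intros P HP. unfold at_right, within. simpl. unfold filtermap. apply (filter_imp P); auto. Qed.
Lemma lim_exp f a : filterlim f F (locally a) -> filterlim (fun s => exp (f s)) F (locally (exp a)).
Proof. intros Hf. apply (filterlim_comp _ _ _ _ _ _ _ _ Hf).
  apply (@ex_derive_continuous R_AbsRing R_NormedModule). auto_derive; auto. Qed.
End L.

Lemma Gf_lim K c g dl lm (z u w : R -> R) :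
  filterlim z (at_right 0) (locally (z 0)) ->
  filterlim u (at_right 0) (locally (u 0)) ->
  filterlim w (at_right 0) (locally (w 0)) ->
  filterlim (Gf K c g dl lm z u w) (at_right 0) (locally (Gf K c g dl lm z u w 0)).
Proof.
  intros Hz Hu Hw. unfold Gf, Vf.
  repeat first [ apply lim_plus | apply lim_minus | apply lim_mult | apply lim_exp | apply lim_opp
   | exact Hz | exact Hu | exact Hw | apply lim_id | apply lim_const ].
Qed.

Lemma e_inv z : exp z * exp (- z) = 1.
Proof. rewrite <- exp_plus. replace (z + - z) with 0 by ring. apply exp_0. Qed.

Lemma e_1mz z : exp z * (1 - z) <= 1.
Proof. pose proof (exp_ineq1_le (- z)). pose proof (e_inv z). pose proof (exp_pos z). nra. Qed.

Lemma h_ge_sq z : -2 <= z -> z*z <= 4*(exp z - 1 - z).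
Proof. intros H. assert (E: exp z = exp (z/2) * exp (z/2)) by (rewrite <- exp_plus; f_equal; field).
  pose proof (exp_ineq1_le (z/2)). rewrite E. nra. Qed.

Lemma h_ge_lin z : -1 - z <= exp z - 1 - z.
Proof. pose proof (exp_pos z). lra. Qed.

Lemma h_ge0 z : 0 <= exp z - 1 - z.
Proof. pose proof (exp_ineq1_le z). lra. Qed.

Lemma h_le_small z : z <= 1/2 -> exp z - 1 - z <= 2*(z*z).
Proof. intros H. pose proof (e_1mz z). pose proof (h_ge0 z).
  assert ((exp z - 1 - z)*(1-z) <= z*z) by nra. nra. Qed.

Lemma h_le_zy z : exp z - 1 - z <= z * (exp z - 1).
Proof. pose proof (e_1mz z). nra. Qed.

Lemma F1 z R : -R <= z <= R -> z*z <= exp R * (z * (exp z - 1)).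
Proof. intros [H1 H2].
  assert (HR: 0 <= R) by lra.
  assert (HE: 1 <= exp R) by (pose proof (exp_ineq1_le R); lra).
  destruct (Rle_dec 0 z) as [Hz|Hz].
  - pose proof (exp_ineq1_le z). assert (z*z <= z*(exp z - 1)) by nra. nra.
  - pose proof (e_1mz z).
    assert (H3: 1 <= exp z * exp R) by (rewrite <- exp_plus; pose proof (exp_ineq1_le (z+R)); lra).
    pose proof (exp_pos z).
    assert (H4: -z * exp z <= 1 - exp z) by nra.
    assert (H5: z*z*exp z <= z*(exp z - 1)) by nra.
    nra.
Qed.

Lemma F3 z R : -R <= z <= R -> z*z <= (4 + R*R) * (exp z - 1 - z).
Proof. intros [H1 H2]. pose proof (h_ge0 z).
  destruct (Rle_dec (-2) z) as [Hz|Hz].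
  - pose proof (h_ge_sq z Hz). nra.
  - pose proof (h_ge_lin z). assert (z*z <= R*R) by nra. nra.
Qed.

Lemma zbound z H : exp z - 1 - z <= H -> -(2+H) <= z <= 2+H.
Proof. intros Hh. pose proof (h_ge0 z). destruct (Rle_dec (-2) z) as [Hz|Hz].
  - pose proof (h_ge_sq z Hz). assert (z*z <= 4*H) by lra. assert (0 <= H) by lra.
    split; [lra|]. destruct (Rle_dec z (2+H)); [auto| exfalso].
    assert ((2+H)*(2+H) < z*z) by nra. nra.
  - pose proof (h_ge_lin z). split; lra.
Qed.

Lemma quad_pos P Q S x y : 0 < P -> Q*Q <= 4*P*S -> 0 <= P*x*x - Q*x*y + S*y*y.
Proof. intros HP HQ.
  assert (4*P*(P*x*x - Q*x*y + S*y*y) = (2*P*x - Q*y)*(2*P*x - Q*y) + (4*P*S - Q*Q)*(y*y)) by ring.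
  pose proof (Rle_0_sqr (2*P*x - Q*y)). unfold Rsqr in *.
  assert (0 <= (4*P*S - Q*Q)*(y*y)) by (apply Rmult_le_pos; [lra| apply Rle_0_sqr]). nra.
Qed.

Lemma gamma_exists a b B : 0 < B -> a*b < B*B -> exists x, 0 < x /\ (b + x*a)*(b + x*a) < 4*x*(B*B).
Proof. intros HB Hab. destruct (Req_dec a 0) as [Ha|Ha].
  - subst a. exists ((b*b + B*B)/(4*(B*B))). split.
    + apply Rdiv_lt_0_compat; nra.
    + replace (4 * ((b * b + B * B) / (4 * (B * B))) * (B * B)) with (b*b+B*B) by (field; lra). nra.
  - exists ((2*(B*B) - a*b)/(a*a)). assert (0 < a*a) by nra. split.
    + apply Rdiv_lt_0_compat; nra.
    + replace (b + (2 * (B * B) - a * b) / (a * a) * a) with (2*(B*B)/a) by (field; lra).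
      replace (4 * ((2 * (B * B) - a * b) / (a * a)) * (B * B)) with (4*(B*B)*(2*(B*B) - a*b)/(a*a)) by (field; lra).
      replace (2 * (B * B) / a * (2 * (B * B) / a)) with (4*(B*B)*(B*B)/(a*a)) by (field; lra).
      apply Rmult_lt_compat_r. apply Rinv_0_lt_compat; lra. apply Rmult_lt_compat_l; nra.
Qed.

Lemma lim_of_bound (X : R -> R) P lm : 0 < lm ->
  (forall t, 0 <= t -> X t * X t * (1 + lm*t) <= P) -> is_lim X p_infty 0.
Proof.
  intros Hl HX. apply is_lim_spec. intros eps. simpl.
  assert (Hp : 0 <= P) by (specialize (HX 0 (Rle_refl 0)); nra).
  exists (P/(lm*(eps*eps))). intros t Ht.
  destruct eps as [e He]; simpl in *.
  assert (Hq: 0 < lm*(e*e)) by (apply Rmult_lt_0_compat; [lra| apply Rmult_lt_0_compat; lra]).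
  assert (H1: P < t*(lm*(e*e))).
  { 
    apply (Rmult_lt_compat_r (lm*(e*e))) in Ht; [|lra].
    replace (P / (lm * (e * e)) * (lm * (e * e))) with P in Ht by (field; nra). lra. }
  assert (t > 0) by (destruct (Rle_dec t 0) as [h|h]; [assert (t*(lm*(e*e)) <= 0) by (rewrite Rmult_comm; apply Rmult_le_0_l; lra); lra | lra]).
  specialize (HX t ltac:(lra)).
  assert (X t * X t * (1+lm*t) < e*e*(1+lm*t)) by (assert (e*e*(1+lm*t) = e*e + t*(lm*(e*e))) by ring; assert (0 < e*e) by (apply Rmult_lt_0_compat; lra); lra).
  assert (X t * X t < e*e) by (apply Rmult_lt_reg_r with (1+lm*t); [nra|lra]).
  rewrite Rminus_0_r. destruct (Rle_dec 0 (X t)).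
  - rewrite Rabs_right by lra. nra.
  - rewrite Rabs_left by lra. nra.
Qed.

Lemma Gf_sol_deriv z0 A a B b gm dl lm (z u w : R -> R) t :
  B <> 0 ->
  is_derive z t (fz z0 B b (z t) (u t) (w t)) ->
  is_derive u t (fu z0 A a B b (z t) (u t) (w t)) ->
  is_derive w t (fw z0 a B (z t) (u t) (w t)) ->
  let K := A + b*a/B in let c := exp z0 in
  let g := c * (exp (z t) - 1) in
  is_derive (Gf K c gm dl lm z u w) t
   (exp (lm*t) * (lm * (Vf K c gm (z t) (u t) (w t) + dl*(u t * z t)) +
     (2*(-K*g*g + (K*b/B + gm*a)*g*w t - gm*B*(w t*w t))
      + dl*(K*g*z t - u t*g - u t*u t + (b/B)*u t*w t)))).
Proof.
  intros HB Hz Hu Hw K c g.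
  eapply is_derive_ext; [intros; reflexivity|].
  pose proof (Gf_deriv K c gm dl lm z u w t _ _ _ Hz Hu Hw) as H.
  match goal with |- is_derive _ _ ?v => replace v with
    (exp (lm*t) * (lm * (Vf K c gm (z t) (u t) (w t) + dl*(u t * z t)) +
     (2*K*c*(exp (z t) - 1)*(fz z0 B b (z t) (u t) (w t)) + 2*u t*(fu z0 A a B b (z t) (u t) (w t))
      + 2*gm*(w t)*(fw z0 a B (z t) (u t) (w t))
      + dl*((fu z0 A a B b (z t) (u t) (w t))*z t + u t*(fz z0 B b (z t) (u t) (w t)))))) end.
  exact H.
  unfold fz, fu, fw, g, K, c. field. exact HB.
Qed.

Lemma cross_le u z : u*z <= (u*u + z*z)/2.
Proof. pose proof (Rle_0_sqr (u - z)). unfold Rsqr in *. lra. Qed.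
Lemma cross_ge u z : -((u*u + z*z)/2) <= u*z.
Proof. pose proof (Rle_0_sqr (u + z)). unfold Rsqr in *. lra. Qed.

Lemma pt_a K c gm dl L zz uu ww h :
  0 < K -> 0 < c -> 0 < gm -> 0 < dl -> dl <= 1/2 -> dl*L <= K*c -> 0 <= h -> zz*zz <= L*h ->
  2*K*c*h + uu*uu + gm*(ww*ww) <= 2*(2*K*c*h + uu*uu + gm*(ww*ww) + dl*(uu*zz)).
Proof.
  intros HK Hc Hg Hd Hd2 HdL Hh HL.
  pose proof (cross_ge uu zz) as Hx.
  assert (H1: dl*(uu*zz) >= - (dl*(uu*uu + zz*zz)/2)).
  { assert (dl*(uu*zz) >= dl * (-((uu*uu + zz*zz)/2))) by (apply Rle_ge; apply Rmult_le_compat_l; lra). lra. }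
  assert (H2: dl*(zz*zz) <= dl*(L*h)) by (apply Rmult_le_compat_l; lra).
  assert (H3: dl*(L*h) <= K*c*h) by (replace (dl*(L*h)) with ((dl*L)*h) by ring; apply Rmult_le_compat_r; lra).
  assert (H4: dl*(uu*uu) <= 1/2*(uu*uu)) by (apply Rmult_le_compat_r; [apply Rle_0_sqr|lra]).
  assert (0 <= gm*(ww*ww)) by (apply Rmult_le_pos; [lra|apply Rle_0_sqr]).
  assert (0 <= K*c*h) by (apply Rmult_le_pos; [apply Rmult_le_pos; lra|lra]).
  assert (dl*(uu*uu + zz*zz) = dl*(uu*uu) + dl*(zz*zz)) by ring.
  assert (2*K*c*h = 2*(K*c*h)) by ring.
  pose proof (Rle_0_sqr uu); unfold Rsqr in *. lra.
Qed.

Lemma pt_b K c gm dl M zz uu ww h g :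
  0 < K -> 0 < c -> 0 < gm -> 0 < dl -> dl <= 1/2 -> 0 <= M ->
  2*K*c*h <= 2*K*M*(g*g) -> zz*zz <= M*M*(g*g) ->
  2*K*c*h + uu*uu + gm*(ww*ww) + dl*(uu*zz) <= (2*K*M + M*M + 2 + gm)*(g*g+uu*uu+ww*ww).
Proof.
  intros HK Hc Hg Hd Hd2 HM Hh Hz.
  pose proof (cross_le uu zz) as Hx.
  assert (H1: dl*(uu*zz) <= dl*((uu*uu + zz*zz)/2)) by (apply Rmult_le_compat_l; lra).
  assert (H2: dl*((uu*uu + zz*zz)/2) <= 1/2*((uu*uu + zz*zz)/2)).
  { apply Rmult_le_compat_r; [|lra]. pose proof (Rle_0_sqr uu); pose proof (Rle_0_sqr zz); unfold Rsqr in *; lra. }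
  pose proof (Rle_0_sqr g). pose proof (Rle_0_sqr uu). pose proof (Rle_0_sqr ww). unfold Rsqr in *.
  assert (0 <= K*M*(g*g)) by (apply Rmult_le_pos; [apply Rmult_le_pos; lra|lra]).
  assert (0 <= gm*(g*g+uu*uu)) by (apply Rmult_le_pos; lra).
  assert (0 <= M*M*(uu*uu+ww*ww)) by (apply Rmult_le_pos; [apply Rmult_le_pos; lra|lra]).
  assert (0 <= K*M*(uu*uu+ww*ww)) by (apply Rmult_le_pos; [apply Rmult_le_pos; lra|lra]).
  assert ((2*K*M + M*M + 2 + gm)*(g*g+uu*uu+ww*ww) =
     2*(K*M*(g*g)) + M*M*(g*g) + 2*(g*g+uu*uu+ww*ww) + gm*(g*g+uu*uu) + gm*(ww*ww)
     + M*M*(uu*uu+ww*ww) + 2*(K*M*(uu*uu+ww*ww))) by ring.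
  assert (2*K*M*(g*g) = 2*(K*M*(g*g))) by ring.
  assert (1/2*((uu*uu + zz*zz)/2) = (uu*uu)/4 + (zz*zz)/4) by field.
  assert (0 <= M*M*(g*g)) by (apply Rmult_le_pos; [apply Rmult_le_pos; lra|lra]).
  lra.
Qed.

Lemma pt_c K B gm bt eps q dl M zz uu ww g :
  0 < K -> 0 < dl -> dl*(K*M+1) <= eps -> dl*(1+q*q) <= eps ->
  -K*g*g + bt*g*ww - gm*B*(ww*ww) <= -eps*(g*g+ww*ww) ->
  zz*g <= M*(g*g) ->
  2*(-K*g*g + bt*g*ww - gm*B*(ww*ww)) + dl*(K*g*zz - uu*g - uu*uu + q*uu*ww)
    <= -(dl/2)*(g*g+uu*uu+ww*ww).
Proof.
  intros HK Hd H1 H2 HQ Hzg.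
  assert (Ha: K*g*zz <= K*M*(g*g)) by (replace (K*g*zz) with (K*(zz*g)) by ring;
     replace (K*M*(g*g)) with (K*(M*(g*g))) by ring; apply Rmult_le_compat_l; lra).
  assert (Hb: -(uu*g) <= uu*uu/4 + g*g) by (pose proof (Rle_0_sqr (uu/2 + g)); unfold Rsqr in *; lra).
  assert (Hc: q*uu*ww <= uu*uu/4 + q*q*(ww*ww)) by (pose proof (Rle_0_sqr (uu/2 - q*ww)); unfold Rsqr in *; lra).
  assert (Hs: K*g*zz - uu*g - uu*uu + q*uu*ww <= (K*M+1)*(g*g) + q*q*(ww*ww) - uu*uu/2) by lra.
  assert (Hs2: dl*(K*g*zz - uu*g - uu*uu + q*uu*ww) <= dl*((K*M+1)*(g*g) + q*q*(ww*ww) - uu*uu/2))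
    by (apply Rmult_le_compat_l; lra).
  pose proof (Rle_0_sqr g). pose proof (Rle_0_sqr ww). unfold Rsqr in *.
  assert (E1: dl*(K*M+1)*(g*g) <= eps*(g*g)) by (apply Rmult_le_compat_r; lra).
  assert (E2: dl*(1+q*q)*(ww*ww) <= eps*(ww*ww)) by (apply Rmult_le_compat_r; lra).
  assert (dl*((K*M+1)*(g*g) + q*q*(ww*ww) - uu*uu/2) = dl*(K*M+1)*(g*g) + dl*(1+q*q)*(ww*ww) - dl*(ww*ww) - dl/2*(uu*uu)) by field.
  assert (Hde: dl <= eps).
  { assert (dl*1 <= dl*(1+q*q)) by (apply Rmult_le_compat_l; [lra| pose proof (Rle_0_sqr q); unfold Rsqr in *; lra]). lra. }
  assert (E3: dl*(g*g) <= eps*(g*g)) by (apply Rmult_le_compat_r; lra).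
  assert (0 <= dl*(ww*ww)) by (apply Rmult_le_pos; lra).
  assert (0 <= dl*(g*g)) by (apply Rmult_le_pos; lra).
  assert (0 <= eps*(ww*ww)) by (apply Rmult_le_pos; lra).
  lra.
Qed.

Lemma pt_facts K c R zz : 0 < K -> 0 < c -> -R <= zz <= R ->
  let M := exp R / c in let g := c * (exp zz - 1) in let h := exp zz - 1 - zz in
  zz*g <= M*(g*g) /\ zz*zz <= M*M*(g*g) /\ 2*K*c*h <= 2*K*M*(g*g) /\ 0 <= h
  /\ zz*zz <= (4+R*R)*h.
Proof.
  intros HK Hc HR M g h.
  pose proof (F1 zz R HR) as H1. pose proof (F3 zz R HR) as H3.
  assert (H2 : h <= zz*(exp zz - 1)) by exact (h_le_zy zz). assert (H0 : 0 <= h) by exact (h_ge0 zz).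
  set (E := exp R) in *. set (y := exp zz - 1) in *.
  assert (HE : 0 < E) by apply exp_pos.
  set (p := zz * y) in *.
  pose proof (Rle_0_sqr zz). pose proof (Rle_0_sqr y). unfold Rsqr in *.
  assert (Hp : 0 <= p).
  { destruct (Rle_dec 0 p); [auto|]. assert (E*p < 0) by (apply Rmult_pos_neg; lra). lra. }
  assert (Hp2 : p <= E*(y*y)).
  { destruct Hp as [Hp|Hp].
    - apply Rmult_le_reg_l with p; [auto|].
      assert (p*p = (zz*zz)*(y*y)) by (unfold p; ring).
      assert ((zz*zz)*(y*y) <= (E*p)*(y*y)) by (apply Rmult_le_compat_r; lra).
      assert (p*(E*(y*y)) = (E*p)*(y*y)) by ring. lra.
    - rewrite <- Hp. apply Rmult_le_pos; lra. }
  assert (EM : M*(g*g) = E*c*(y*y)) by (unfold M, g; field; lra).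
  assert (EM2 : M*M*(g*g) = E*E*(y*y)) by (unfold M, g; field; lra).
  assert (Ezg : zz*g = c*p) by (unfold g, p; ring).
  assert (Hcp: c*p <= c*(E*(y*y))) by (apply Rmult_le_compat_l; lra).
  assert (HEp: E*p <= E*(E*(y*y))) by (apply Rmult_le_compat_l; lra).
  split; [|split; [|split; [|split]]].
  - rewrite Ezg, EM. lra.
  - rewrite EM2. lra.
  - assert (2*K*M*(g*g) = 2*K*(M*(g*g))) by ring.
    assert (2*K*c*h = 2*K*(c*h)) by ring.
    assert (c*h <= c*p) by (apply Rmult_le_compat_l; lra).
    assert (2*K*(c*h) <= 2*K*(c*p)) by (apply Rmult_le_compat_l; lra).
    assert (2*K*(c*p) <= 2*K*(c*(E*(y*y)))) by (apply Rmult_le_compat_l; lra).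
    assert (c*(E*(y*y)) = E*c*(y*y)) by ring. rewrite EM in *. lra.
  - exact H0.
  - exact H3.
Qed.

Lemma norm3_lt x y v d : norm3 x y v < d -> x*x + y*y + v*v < d*d.
Proof. unfold norm3. intros H.
  replace (x^2 + y^2 + v^2) with (x*x+y*y+v*v) in H by ring.
  assert (HS: 0 <= x*x+y*y+v*v) by (pose proof (Rle_0_sqr x); pose proof (Rle_0_sqr y); pose proof (Rle_0_sqr v); unfold Rsqr in *; lra).
  pose proof (sqrt_sqrt _ HS). pose proof (sqrt_pos (x*x+y*y+v*v)).
  set (s := sqrt (x*x+y*y+v*v)) in *.
  assert (s*s <= s*d) by (apply Rmult_le_compat_l; lra).
  assert (s*d < d*d) by (apply Rmult_lt_compat_r; lra). lra.
Qed.

Lemma norm3_lt' x y v e : 0 < e -> x*x + y*y + v*v < e*e -> norm3 x y v < e.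
Proof. unfold norm3. intros He H.
  replace (x^2 + y^2 + v^2) with (x*x+y*y+v*v) by ring.
  assert (HS: 0 <= x*x+y*y+v*v) by (pose proof (Rle_0_sqr x); pose proof (Rle_0_sqr y); pose proof (Rle_0_sqr v); unfold Rsqr in *; lra).
  pose proof (sqrt_sqrt _ HS). pose proof (sqrt_pos (x*x+y*y+v*v)).
  set (s := sqrt (x*x+y*y+v*v)) in *.
  destruct (Rlt_dec s e) as [h|h]; [auto|exfalso].
  assert (e*e <= s*e) by (apply Rmult_le_compat_r; lra).
  assert (s*e <= s*s) by (apply Rmult_le_compat_l; lra). lra.
Qed.

Lemma main z0 A a B b : 0 < B -> 0 < A + b*a/B -> a*b < B*B ->
  (forall eps, 0 < eps -> exists delta, 0 < delta /\
     forall z u w : R -> R, is_solution z0 A a B b z u w ->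
       norm3 (z 0) (u 0) (w 0) < delta ->
       forall t, 0 <= t -> norm3 (z t) (u t) (w t) < eps) /\
  (forall z u w : R -> R, is_solution z0 A a B b z u w ->
     is_lim z p_infty 0 /\ is_lim u p_infty 0 /\ is_lim w p_infty 0).
Proof.
  intros HB HK0 Hab.
  assert (Hder : forall gm dl lm (z u w : R -> R), is_solution z0 A a B b z u w ->
    forall t, 0 < t -> is_derive (Gf (A + b*a/B) (exp z0) gm dl lm z u w) t
   (exp (lm*t) * (lm * (Vf (A + b*a/B) (exp z0) gm (z t) (u t) (w t) + dl*(u t * z t)) +
     (2*(-(A + b*a/B)*(exp z0 * (exp (z t) - 1))*(exp z0 * (exp (z t) - 1))
         + ((A + b*a/B)*b/B + gm*a)*(exp z0 * (exp (z t) - 1))*w t - gm*B*(w t*w t))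
      + dl*((A + b*a/B)*(exp z0 * (exp (z t) - 1))*z t - u t*(exp z0 * (exp (z t) - 1))
            - u t*u t + (b/B)*u t*w t))))).
  { intros gm dl lm z u w [Hd _] t Ht. destruct (Hd t Ht) as [H1 [H2 H3]].
    exact (Gf_sol_deriv z0 A a B b gm dl lm z u w t ltac:(lra) H1 H2 H3). }
  assert (Hlim0 : forall gm dl lm (z u w : R -> R), is_solution z0 A a B b z u w ->
    filterlim (Gf (A + b*a/B) (exp z0) gm dl lm z u w) (at_right 0)
      (locally (Gf (A + b*a/B) (exp z0) gm dl lm z u w 0))).
  { intros gm dl lm z u w [_ [H1 [H2 H3]]]. apply Gf_lim; auto. }
  set (K := A + b*a/B) in *.
  set (c := exp z0) in *.
  assert (Hc : 0 < c) by apply exp_pos.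
  destruct (gamma_exists a b B HB Hab) as [x [Hx Hxq]].
  set (gm := K*x/B).
  assert (Hgm : 0 < gm) by (unfold gm; apply Rdiv_lt_0_compat; [apply Rmult_lt_0_compat|]; lra).
  set (bt := K*b/B + gm*a).
  assert (Hbt : bt*bt < 4*K*gm*B).
  { assert (E1: bt = K/B*(b + x*a)) by (unfold bt, gm; field; lra).
    assert (E2: 4*K*gm*B = (K/B)*(K/B)*(4*x*(B*B))) by (unfold gm; field; lra).
    assert (E3: bt*bt = (K/B)*(K/B)*((b + x*a)*(b + x*a))) by (rewrite E1; ring).
    rewrite E2, E3. apply Rmult_lt_compat_l; [|exact Hxq].
    assert (0 < K/B) by (apply Rdiv_lt_0_compat; lra). apply Rmult_lt_0_compat; lra. }
  set (Dl := 4*K*gm*B - bt*bt).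
  assert (HDl : 0 < Dl) by (unfold Dl; lra).
  assert (HKg : 0 < K + gm*B) by (assert (0 < gm*B) by (apply Rmult_lt_0_compat; lra); lra).
  set (eps := Dl/(8*(K+gm*B))).
  assert (Heps : 0 < eps) by (unfold eps; apply Rdiv_lt_0_compat; lra).
  assert (He8 : eps*(8*(K+gm*B)) = Dl) by (unfold eps; field; lra).
  assert (HQ : forall g w, -K*g*g + bt*g*w - gm*B*(w*w) <= -eps*(g*g+w*w)).
  { intros g w.
    assert (Hbb : 0 <= bt*bt) by (pose proof (Rle_0_sqr bt); unfold Rsqr in *; lra).
    assert (HKgB : 4*K*gm*B = 4*(K*(gm*B))) by ring.
    assert (Hkk : 0 < K*K) by (apply Rmult_lt_0_compat; lra).
    assert (HgB : 0 < gm*B) by (apply Rmult_lt_0_compat; lra).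
    assert (Hgg : 0 < (gm*B)*(gm*B)) by (apply Rmult_lt_0_compat; lra).
    assert (HKe : eps < K).
    { destruct (Rlt_dec eps K) as [h|h]; [auto|exfalso].
      assert (K*(8*(K+gm*B)) <= eps*(8*(K+gm*B))) by (apply Rmult_le_compat_r; lra).
      assert (K*(8*(K+gm*B)) = 8*(K*K) + 8*(K*(gm*B))) by ring. unfold Dl in *. lra. }
    assert (HBe : eps < gm*B).
    { destruct (Rlt_dec eps (gm*B)) as [h|h]; [auto|exfalso].
      assert ((gm*B)*(8*(K+gm*B)) <= eps*(8*(K+gm*B))) by (apply Rmult_le_compat_r; lra).
      assert ((gm*B)*(8*(K+gm*B)) = 8*(K*(gm*B)) + 8*((gm*B)*(gm*B))) by ring. unfold Dl in *. lra. }
    assert (Hdisc : bt*bt <= 4*(K-eps)*(gm*B-eps)).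
    { assert (4*(K-eps)*(gm*B-eps) = 4*K*gm*B - (eps*(8*(K+gm*B)))/2 + 4*(eps*eps)) by field.
      pose proof (Rle_0_sqr eps). unfold Rsqr in *. unfold Dl in *. lra. }
    pose proof (quad_pos (K-eps) bt (gm*B-eps) g w ltac:(lra) Hdisc) as Hq.
    assert ((K-eps)*g*g - bt*g*w + (gm*B-eps)*w*w = (-eps*(g*g+w*w)) - (-K*g*g + bt*g*w - gm*B*(w*w))) by ring.
    lra. }
  assert (Vmono : forall z u w : R -> R, is_solution z0 A a B b z u w -> forall t, 0 <= t ->
     Vf K c gm (z t) (u t) (w t) <= Vf K c gm (z 0) (u 0) (w 0)).
  { intros z u w Hs t Ht.
    assert (H := mono_lemma (Gf K c gm 0 0 z u w) _ (Hder gm 0 0 z u w Hs)).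
    refine (_ (H _ (Hlim0 gm 0 0 z u w Hs) t Ht)).
    - unfold Gf. rewrite !Rmult_0_l, exp_0, !Rplus_0_r, !Rmult_1_l. auto.
    - intros s Hs'. rewrite !Rmult_0_l, exp_0, Rmult_1_l, Rplus_0_l, Rplus_0_r.
      pose proof (HQ (c * (exp (z s) - 1)) (w s)).
      assert (0 <= (c * (exp (z s) - 1))*(c * (exp (z s) - 1)) + w s * w s)
        by (pose proof (Rle_0_sqr (c * (exp (z s) - 1))); pose proof (Rle_0_sqr (w s)); unfold Rsqr in *; lra).
      assert (0 <= eps*((c * (exp (z s) - 1))*(c * (exp (z s) - 1)) + w s * w s)) by (apply Rmult_le_pos; lra).
      unfold bt in *. lra. }
  split.
  - intros e He.
    set (P := 2/(K*c) + 1 + 1/gm).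
    assert (HKc : 0 < K*c) by (apply Rmult_lt_0_compat; lra).
    assert (HP : 0 < P) by (unfold P; assert (0 < 2/(K*c)) by (apply Rdiv_lt_0_compat; lra);
       assert (0 < 1/gm) by (apply Rdiv_lt_0_compat; lra); lra).
    set (eta := Rmin (2*K*c) (e*e/P)).
    assert (Hee : 0 < e*e) by (apply Rmult_lt_0_compat; lra).
    assert (Heta : 0 < eta) by (unfold eta; apply Rmin_glb_lt; [lra| apply Rdiv_lt_0_compat; lra]).
    assert (Heta1 : eta <= 2*K*c) by apply Rmin_l.
    assert (Heta2 : eta*P <= e*e).
    { assert (eta <= e*e/P) by apply Rmin_r.
      assert (eta*P <= e*e/P*P) by (apply Rmult_le_compat_r; lra).
      replace (e*e/P*P) with (e*e) in * by (field; lra). lra. }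
    set (Q := 4*K*c + 1 + gm).
    assert (HQ0 : 0 < Q) by (unfold Q; lra).
    assert (HeQ : 0 < eta/Q) by (apply Rdiv_lt_0_compat; lra).
    exists (Rmin (1/2) (sqrt (eta/Q))).
    split; [apply Rmin_glb_lt; [lra| apply sqrt_lt_R0; lra]|].
    intros z u w Hs Hn t Ht.
    apply norm3_lt in Hn.
    set (d0 := Rmin (1/2) (sqrt (eta/Q))) in *.
    assert (Hd0 : 0 < d0) by (apply Rmin_glb_lt; [lra| apply sqrt_lt_R0; lra]).
    assert (Hd1 : d0 <= 1/2) by apply Rmin_l.
    assert (Hd2 : d0 <= sqrt (eta/Q)) by apply Rmin_r.
    assert (Hdd : d0*d0 <= eta/Q).
    { rewrite <- (sqrt_sqrt (eta/Q)) by lra. apply Rmult_le_compat; lra. }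
    assert (Hdd' : d0*d0 <= 1/4) by (assert (d0*d0 <= 1/2*(1/2)) by (apply Rmult_le_compat; lra); lra).
    pose proof (Rle_0_sqr (z 0)). pose proof (Rle_0_sqr (u 0)). pose proof (Rle_0_sqr (w 0)).
    pose proof (Rle_0_sqr (z t)). pose proof (Rle_0_sqr (u t)). pose proof (Rle_0_sqr (w t)).
    unfold Rsqr in *.
    assert (Hz0 : z 0 <= 1/2).
    { destruct (Rle_dec (z 0) (1/2)) as [h|h]; [auto|exfalso].
      assert (1/2*(1/2) <= z 0 * z 0) by (apply Rmult_le_compat; lra). lra. }
    pose proof (h_le_small (z 0) Hz0) as Hh0.
    assert (HV0 : Vf K c gm (z 0) (u 0) (w 0) < eta).
    { unfold Vf.
      assert (2*K*c*(exp (z 0) - 1 - z 0) <= 2*K*c*(2*(z 0 * z 0))) by (apply Rmult_le_compat_l; lra).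
      assert (0 <= gm*(w 0 * w 0)) by (apply Rmult_le_pos; lra).
      assert (0 <= 4*K*c*(u 0 * u 0 + w 0 * w 0)) by (apply Rmult_le_pos; lra).
      assert (0 <= gm*(z 0 * z 0 + u 0 * u 0)) by (apply Rmult_le_pos; lra).
      assert (Q*(z 0 * z 0 + u 0 * u 0 + w 0 * w 0) < Q*(d0*d0)) by (apply Rmult_lt_compat_l; lra).
      assert (Q*(d0*d0) <= Q*(eta/Q)) by (apply Rmult_le_compat_l; lra).
      replace (Q*(eta/Q)) with eta in * by (field; lra).
      assert (Q*(z 0 * z 0 + u 0 * u 0 + w 0 * w 0) = 2*(2*K*c*(z 0 * z 0)) + 4*K*c*(u 0 * u 0 + w 0 * w 0)
         + (z 0 * z 0 + u 0 * u 0 + w 0 * w 0) + gm*(z 0 * z 0 + u 0 * u 0) + gm*(w 0 * w 0)) by (unfold Q; ring).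
      assert (2*K*c*(2*(z 0 * z 0)) = 2*(2*K*c*(z 0 * z 0))) by ring.
      lra. }
    pose proof (Vmono z u w Hs t Ht) as HVt.
    set (Vt := Vf K c gm (z t) (u t) (w t)) in *.
    assert (HVt' : Vt < eta) by lra.
    assert (Hh : 0 <= exp (z t) - 1 - z t) by apply h_ge0.
    assert (Hgw : 0 <= gm*(w t * w t)) by (apply Rmult_le_pos; lra).
    assert (HVh : 2*K*c*(exp (z t) - 1 - z t) <= Vt) by (unfold Vt, Vf; lra).
    assert (Hzt : -2 <= z t).
    { destruct (Rle_dec (-2) (z t)) as [h|h]; [auto|exfalso].
      pose proof (h_ge_lin (z t)).
      assert (2*K*c*1 < 2*K*c*(exp (z t) - 1 - z t)) by (apply Rmult_lt_compat_l; lra). lra. }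
    pose proof (h_ge_sq (z t) Hzt) as Hsq.
    apply norm3_lt'; [lra|].
    assert (Hz2 : z t * z t <= 2/(K*c)*Vt).
    { assert (2/(K*c)*(2*K*c*(exp (z t) - 1 - z t)) <= 2/(K*c)*Vt)
        by (apply Rmult_le_compat_l; [apply Rlt_le, Rdiv_lt_0_compat; lra| lra]).
      replace (2/(K*c)*(2*K*c*(exp (z t) - 1 - z t))) with (4*(exp (z t) - 1 - z t)) in * by (field; lra).
      lra. }
    assert (Hw2 : w t * w t <= 1/gm*Vt).
    { assert (1/gm*(gm*(w t * w t)) <= 1/gm*Vt)
        by (apply Rmult_le_compat_l; [apply Rlt_le, Rdiv_lt_0_compat; lra| unfold Vt, Vf; pose proof (Rmult_le_pos (2*K*c) (exp (z t) - 1 - z t)); nra]).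
      replace (1/gm*(gm*(w t * w t))) with (w t * w t) in * by (field; lra). lra. }
    assert (Hu2 : u t * u t <= Vt).
    { unfold Vt, Vf. assert (0 <= 2*K*c*(exp (z t) - 1 - z t)) by (apply Rmult_le_pos; lra). lra. }
    assert (P*Vt < P*eta) by (apply Rmult_lt_compat_l; lra).
    assert (P*Vt = 2/(K*c)*Vt + Vt + 1/gm*Vt) by (unfold P; ring).
    assert (P*eta = eta*P) by ring.
    lra.
  - intros z u w Hs.
    assert (HKc : 0 < K*c) by (apply Rmult_lt_0_compat; lra).
    set (V0 := Vf K c gm (z 0) (u 0) (w 0)).
    assert (Vpos : forall t, 0 <= 2*K*c*(exp (z t) - 1 - z t) /\ 0 <= u t * u t /\ 0 <= gm*(w t * w t)).
    { intros t. pose proof (h_ge0 (z t)). pose proof (Rle_0_sqr (u t)). pose proof (Rle_0_sqr (w t)).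
      unfold Rsqr in *. split; [apply Rmult_le_pos; lra| split; [lra| apply Rmult_le_pos; lra]]. }
    set (H := V0/(2*K*c)).
    assert (Hzb : forall t, 0 <= t -> -(2+H) <= z t <= 2+H).
    { intros t Ht. apply zbound. pose proof (Vmono z u w Hs t Ht) as HV. fold V0 in HV. destruct (Vpos t) as [? [? ?]].
      assert (Vf K c gm (z t) (u t) (w t) = 2*K*c*(exp (z t) - 1 - z t) + u t * u t + gm*(w t * w t)) by reflexivity.
      assert (2*K*c*(exp (z t) - 1 - z t) <= V0) by lra.
      unfold H. apply Rmult_le_reg_l with (2*K*c); [lra|].
      replace (2*K*c*(V0/(2*K*c))) with V0 by (field; lra). lra. }
    set (R0 := 2+H).
    set (M := exp R0 / c).
    assert (HM : 0 <= M) by (unfold M; apply Rlt_le, Rdiv_lt_0_compat; [apply exp_pos|lra]).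
    set (L := 4 + R0*R0).
    assert (HL : 0 < L) by (unfold L; pose proof (Rle_0_sqr R0); unfold Rsqr in *; lra).
    set (q := b/B).
    assert (HKM : 0 < K*M+1) by (assert (0 <= K*M) by (apply Rmult_le_pos; lra); lra).
    assert (Hqq : 0 < 1+q*q) by (pose proof (Rle_0_sqr q); unfold Rsqr in *; lra).
    set (dl := Rmin (Rmin (1/2) (eps/(K*M+1))) (Rmin (eps/(1+q*q)) (K*c/L))).
    assert (Hdl : 0 < dl).
    { unfold dl. apply Rmin_glb_lt; apply Rmin_glb_lt; try lra; apply Rdiv_lt_0_compat; lra. }
    assert (Hdl1 : dl <= 1/2) by (unfold dl; eapply Rle_trans; [apply Rmin_l| apply Rmin_l]).
    assert (Hdl2 : dl*(K*M+1) <= eps).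
    { assert (dl <= eps/(K*M+1)) by (unfold dl; eapply Rle_trans; [apply Rmin_l| apply Rmin_r]).
      assert (dl*(K*M+1) <= eps/(K*M+1)*(K*M+1)) by (apply Rmult_le_compat_r; lra).
      replace (eps/(K*M+1)*(K*M+1)) with eps in * by (field; lra). lra. }
    assert (Hdl3 : dl*(1+q*q) <= eps).
    { assert (dl <= eps/(1+q*q)) by (unfold dl; eapply Rle_trans; [apply Rmin_r| apply Rmin_l]).
      assert (dl*(1+q*q) <= eps/(1+q*q)*(1+q*q)) by (apply Rmult_le_compat_r; lra).
      replace (eps/(1+q*q)*(1+q*q)) with eps in * by (field; lra). lra. }
    assert (Hdl4 : dl*L <= K*c).
    { assert (dl <= K*c/L) by (unfold dl; eapply Rle_trans; [apply Rmin_r| apply Rmin_r]).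
      assert (dl*L <= K*c/L*L) by (apply Rmult_le_compat_r; lra).
      replace (K*c/L*L) with (K*c) in * by (field; lra). lra. }
    set (C := 2*K*M + M*M + 2 + gm).
    assert (HC : 0 < C) by (unfold C; assert (0 <= K*M) by (apply Rmult_le_pos; lra);
       assert (0 <= M*M) by (apply Rmult_le_pos; lra); lra).
    set (lm := (dl/2)/C).
    assert (Hlm : 0 < lm) by (unfold lm; apply Rdiv_lt_0_compat; lra).
    assert (HlmC : lm*C = dl/2) by (unfold lm; field; lra).
    assert (Hpt : forall t, 0 <= t ->
      let g := c * (exp (z t) - 1) in
      Vf K c gm (z t) (u t) (w t) <= 2*(Vf K c gm (z t) (u t) (w t) + dl*(u t * z t)) /\
      Vf K c gm (z t) (u t) (w t) + dl*(u t * z t) <= C*(g*g + u t * u t + w t * w t) /\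
      z t * z t <= L*(exp (z t) - 1 - z t) /\
      2*(-K*g*g + bt*g*w t - gm*B*(w t*w t)) + dl*(K*g*z t - u t*g - u t*u t + q*u t*w t)
        <= -(dl/2)*(g*g+u t*u t+w t*w t)).
    { intros t Ht g.
      destruct (pt_facts K c R0 (z t) HK0 Hc (Hzb t Ht)) as [F1 [F2 [F3 [F4 F5]]]].
      fold M in F1, F2, F3. fold g in F1, F2, F3. fold L in F5.
      split; [|split; [|split]].
      - unfold Vf. apply (pt_a K c gm dl L); auto; lra.
      - unfold Vf. apply (pt_b K c gm dl M); auto; lra.
      - exact F5.
      - apply (pt_c K B gm bt eps q dl M); auto. }
    assert (Gm : forall t, 0 <= t -> Gf K c gm dl lm z u w t <= Gf K c gm dl lm z u w 0).
    { apply (mono_lemma (Gf K c gm dl lm z u w) _ (Hder gm dl lm z u w Hs)); [|exact (Hlim0 gm dl lm z u w Hs)].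
      intros t Ht. destruct (Hpt t ltac:(lra)) as [P1 [P2 [P3 P4]]].
      set (g := c * (exp (z t) - 1)) in *.
      set (Wt := Vf K c gm (z t) (u t) (w t) + dl*(u t * z t)) in *.
      set (S := g*g + u t*u t + w t*w t) in *.
      assert (lm*Wt <= lm*(C*S)) by (apply Rmult_le_compat_l; lra).
      assert (lm*(C*S) = dl/2*S) by (rewrite <- HlmC; ring).
      fold q. fold bt.
      assert (-(dl/2)*S = -(dl/2*S)) by ring.
      assert (lm*Wt + (2*(-K*g*g + bt*g*w t - gm*B*(w t*w t)) + dl*(K*g*z t - u t*g - u t*u t + q*u t*w t)) <= 0) by lra.
      assert (0 < exp (lm*t)) by apply exp_pos.
      rewrite <- (Rmult_0_r (exp (lm*t))). apply Rmult_le_compat_l; lra. }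
    set (W0 := Gf K c gm dl lm z u w 0).
    assert (HVb : forall t, 0 <= t -> Vf K c gm (z t) (u t) (w t) * (1 + lm*t) <= 2*W0).
    { intros t Ht. pose proof (Gm t Ht) as G1. destruct (Hpt t Ht) as [P1 [P2 [P3 P4]]].
      fold W0 in G1. unfold Gf in G1.
      set (Wt := Vf K c gm (z t) (u t) (w t) + dl*(u t * z t)) in *.
      set (Vt := Vf K c gm (z t) (u t) (w t)) in *.
      assert (0 <= Vt) by (destruct (Vpos t) as [? [? ?]]; unfold Vt, Vf; lra).
      pose proof (exp_ineq1_le (lm*t)).
      assert (Wt*(1+lm*t) <= Wt*exp (lm*t)) by (apply Rmult_le_compat_l; lra).
      assert (Vt*(1+lm*t) <= (2*Wt)*(1+lm*t)) by (apply Rmult_le_compat_r; [nra|lra]).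
      assert (exp (lm*t) * Wt = Wt*exp (lm*t)) by ring. lra. }
    assert (Hcomp : forall (X : R -> R) k, 0 <= k -> (forall t, 0 <= t -> X t * X t <= k * Vf K c gm (z t) (u t) (w t)) ->
       is_lim X p_infty 0).
    { intros X k Hk HX. apply (lim_of_bound X (k*(2*W0)) lm Hlm). intros t Ht.
      pose proof (HVb t Ht). pose proof (HX t Ht).
      assert (X t * X t * (1+lm*t) <= k * Vf K c gm (z t) (u t) (w t) * (1+lm*t)) by (apply Rmult_le_compat_r; nra).
      assert (k * (Vf K c gm (z t) (u t) (w t) * (1+lm*t)) <= k*(2*W0)) by (apply Rmult_le_compat_l; lra).
      lra. }
    split; [|split].
    + apply (Hcomp z (L/(2*K*c))). apply Rlt_le, Rdiv_lt_0_compat; lra.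
      intros t Ht. destruct (Hpt t Ht) as [P1 [P2 [P3 P4]]]. destruct (Vpos t) as [V1 [V2 V3]].
      assert (2*K*c*(exp (z t) - 1 - z t) <= Vf K c gm (z t) (u t) (w t)) by (unfold Vf; lra).
      assert (L/(2*K*c)*(2*K*c*(exp (z t) - 1 - z t)) <= L/(2*K*c)*Vf K c gm (z t) (u t) (w t))
        by (apply Rmult_le_compat_l; [apply Rlt_le, Rdiv_lt_0_compat; lra | lra]).
      replace (L/(2*K*c)*(2*K*c*(exp (z t) - 1 - z t))) with (L*(exp (z t) - 1 - z t)) in * by (field; lra).
      lra.
    + apply (Hcomp u 1). lra.
      intros t Ht. destruct (Vpos t) as [V1 [V2 V3]]. unfold Vf. lra.
    + apply (Hcomp w (1/gm)). apply Rlt_le, Rdiv_lt_0_compat; lra.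
      intros t Ht. destruct (Vpos t) as [V1 [V2 V3]].
      assert (gm*(w t * w t) <= Vf K c gm (z t) (u t) (w t)) by (unfold Vf; lra).
      assert (1/gm*(gm*(w t * w t)) <= 1/gm*Vf K c gm (z t) (u t) (w t))
        by (apply Rmult_le_compat_l; [apply Rlt_le, Rdiv_lt_0_compat; lra | lra]).
      replace (1/gm*(gm*(w t * w t))) with (w t * w t) in * by (field; lra). lra.
Qed.

Theorem theorem6p2 (b1 b2 n1 n2 r1 r2 : R)
  (hb1 : 0 < b1) (hb2 : 0 < b2)
  (hn1 : 0 < n1 < 1) (hn2 : 0 < n2 < 1)
  (hr1 : 0 < r1 < 1) (hr2 : 0 < r2 < 1) :
  let A := cA b1 b2 n1 n2 in
  let a := ca b1 b2 n1 n2 in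
  let B := cB b1 b2 n1 n2 in
  let b := cb b1 b2 n1 n2 in
  let D := cD b1 b2 n1 n2 r1 r2 in
  let d := cd b1 b2 n1 n2 r1 r2 in
  0 < 1 - (D * B - b * d) / (A * B + b * a) ->
  let z0 := ln (1 - (D * B - b * d) / (A * B + b * a)) in
  B ^ 2 > a * b ->
  (* Lyapunov stability of the origin *)
  (forall eps, 0 < eps -> exists delta, 0 < delta /\
     forall z u w : R -> R, is_solution z0 A a B b z u w ->
       norm3 (z 0) (u 0) (w 0) < delta ->
       forall t, 0 <= t -> norm3 (z t) (u t) (w t) < eps) /\
  (* global attractivity: every solution tends to (0,0,0) *)
  (forall z u w : R -> R, is_solution z0 A a B b z u w ->
     is_lim z p_infty 0 /\ is_lim u p_infty 0 /\ is_lim w p_infty 0).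
Proof.
  intros A a B b D d Hpos z0 HB2.
  assert (HB : 0 < B).
  { unfold B, cB. assert (0 < b1*n1) by (apply Rmult_lt_0_compat; lra).
    assert (0 < b2*n2) by (apply Rmult_lt_0_compat; lra). lra. }
  assert (HK : 0 < A + b*a/B).
  { assert (E : A*B + b*a = 2*((b1*(1-n1))*(b2*n2) + (b2*(1-n2))*(b1*n1)))
      by (unfold A, B, a, b, cA, cB, ca, cb; ring).
    assert (0 < b1*(1-n1)) by (apply Rmult_lt_0_compat; lra).
    assert (0 < b2*(1-n2)) by (apply Rmult_lt_0_compat; lra).
    assert (0 < b1*n1) by (apply Rmult_lt_0_compat; lra).
    assert (0 < b2*n2) by (apply Rmult_lt_0_compat; lra).
    assert (0 < (b1*(1-n1))*(b2*n2)) by (apply Rmult_lt_0_compat; lra).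
    assert (0 < (b2*(1-n2))*(b1*n1)) by (apply Rmult_lt_0_compat; lra).
    replace (A + b*a/B) with ((A*B + b*a)/B) by (field; lra).
    apply Rdiv_lt_0_compat; lra. }
  assert (Hab : a*b < B*B) by (replace (B*B) with (B^2) by ring; lra).
  exact (main z0 A a B b HB HK Hab).
Qed.
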